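(* Let $X,Y,Z$ be finite sets, $T\subseteq X\times Y\times Z$, and let $A\subseteq X$, $B\subseteq Y$, $C\subseteq Z$ be independent random subsets such that each element of $X$ is included in $A$ with probability $\alpha$, independently of the other elements, each element of $Y$ is included in $B$ with probability $\beta$, independently, and each element of $Z$ is included in $C$ with probability $\gamma$, independently. Then $$\Pr[T\cap(A\times B\times C)=\emptyset]\le(1-\alpha)^{|\pi_X(T)|}+(1-\beta)^{\min_{x\in\pi_X(T)}|\pi_Y(T\cap(\{x\}\times Y\times Z))|}+(1-\gamma)^{\min_{(x,y)\in\pi_{XY}(T)}|\pi_Z(T\cap(\{x\}\times\{y\}\times Z))|},$$ where $\pi_X,\pi_Y,\pi_Z,\pi_{XY}$ denote the projections from $X\times Y\times Z$ onto $X$, $Y$, $Z$, $X\times Y$ respectively. *)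

(* Defs.v *)
From HB Require Import structures.
From mathcomp Require Import all_boot all_order all_algebra.
Set Implicit Arguments. Unset Strict Implicit. Unset Printing Implicit Defensive.
Import Order.TTheory GRing.Theory Num.Theory.
Local Open Scope ring_scope.

Definition bern_weight (R : ringType) (U : finType) (p : R) (A : {set U}) : R :=
  p ^+ #|A| * (1 - p) ^+ #|~: A|.

Definition prob_miss (R : ringType) (X Y Z : finType) (T : {set X * Y * Z})
    (alpha beta gamma : R) : R :=
  \sum_(A : {set X}) \sum_(B : {set Y}) \sum_(C : {set Z})
    bern_weight alpha A * bern_weight beta B * bern_weight gamma C *
    (T :&: setX (setX A B) C == set0)%:R.

Definition piX (X Y Z : finType) (T : {set X * Y * Z}) : {set X} :=
  [set t.1.1 | t in T].
Definition piXY (X Y Z : finType) (T : {set X * Y * Z}) : {set X * Y} :=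
  [set t.1 | t in T].
Definition sliceY (X Y Z : finType) (T : {set X * Y * Z}) (x : X) : {set Y} :=
  [set t.1.2 | t in T & t.1.1 == x].
Definition sliceZ (X Y Z : finType) (T : {set X * Y * Z}) (xy : X * Y) : {set Z} :=
  [set t.2 | t in T & t.1 == xy].

(* min over x ∈ π_X(T) of |sliceY x|; empty-minimum default #|Y| (only relevant
   when T = ∅, in which case the inequality holds for any default). *)
Definition minY (X Y Z : finType) (T : {set X * Y * Z}) : nat :=
  \big[minn/#|Y|]_(x in piX T) #|sliceY T x|.
Definition minZ (X Y Z : finType) (T : {set X * Y * Z}) : nat :=
  \big[minn/#|Z|]_(xy in piXY T) #|sliceZ T xy|.

(* Main.v *)
Require Import Defs.
From HB Require Import structures.
From mathcomp Require Import all_boot all_order all_algebra.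
From mathcomp Require Import lra.
Set Implicit Arguments. Unset Strict Implicit. Unset Printing Implicit Defensive.
Import Order.TTheory GRing.Theory Num.Theory.
Local Open Scope ring_scope.

Lemma bminn_le (U : finType) (P : {set U}) (F : U -> nat) d x :
  x \in P -> (\big[minn/d]_(i in P) F i <= F x)%N.
Proof.
move=> Hx; rewrite unlock.
have : x \in index_enum U by rewrite mem_index_enum.
elim: (index_enum U) => [|a s IH] //=; rewrite in_cons => /orP [/eqP <-|/IH h].
  by rewrite Hx geq_minl.
case: (a \in P) => //; exact: leq_trans (geq_minr _ _) h.
Qed.

Section W.
Variable R : realFieldType.
Variable U : finType.
Variable p : R.
Hypothesis p0 : 0 <= p.
Hypothesis p1 : p <= 1.

Lemma bw_ge0 (A : {set U}) : 0 <= bern_weight p A.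
Proof. by rewrite /bern_weight mulr_ge0 // exprn_ge0 // subr_ge0. Qed.

Lemma bw_prod (A : {set U}) : bern_weight p A = \prod_(u : U) (if u \in A then p else 1 - p).
Proof.
rewrite (bigID (fun u => u \in A)) /=.
rewrite (eq_bigr (fun _ => p)); last by move=> i ->.
rewrite [X in _ * X](eq_bigr (fun _ => 1 - p)); last by move=> i /negbTE ->.
rewrite !prodr_const /bern_weight; congr (_ ^+ _ * _ ^+ _).
by apply: eq_card => u; rewrite inE.
Qed.

Lemma sum_sets (G : {set U} -> R) :
  \sum_(A : {set U}) G A = \sum_(f : {ffun U -> bool}) G [set x | f x].
Proof.
rewrite (reindex (fun f : {ffun U -> bool} => [set x | f x])) //=.
exists (fun A : {set U} => [ffun x => x \in A]).
  by move=> f _; apply/ffunP => x; rewrite ffunE inE.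
by move=> A _; apply/setP => x; rewrite inE ffunE.
Qed.

Lemma bw_miss (S : {set U}) :
  \sum_(A : {set U}) bern_weight p A * (A :&: S == set0)%:R = (1 - p) ^+ #|S|.
Proof.
pose G := fun (u : U) (b : bool) =>
  (if b then p else 1 - p) * (if b && (u \in S) then 0 else 1).
have H : \prod_(u : U) \sum_(b : bool) G u b = (1 - p) ^+ #|S|.
  rewrite -prodr_const (bigID (fun u => u \in S)) /=.
  rewrite [X in _ * X]big1; last first.
    by move=> u /negbTE Hu; rewrite big_bool /G /= Hu !mulr1 addrC subrK.
  rewrite mulr1; apply: eq_bigr => u Hu.
  by rewrite big_bool /G /= Hu mulr0 mulr1 add0r.
rewrite -H bigA_distr_bigA sum_sets; apply: eq_bigr => f _.
rewrite /G big_split /= bw_prod; congr (_ * _).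
  by apply: eq_bigr => u _; rewrite inE.
case: eqP => [E|/eqP NE].
  symmetry; apply: big1 => u _; case Hf: (f u) => //=; case Hs: (u \in S) => //.
  have : u \in [set x | f x] :&: S by rewrite !inE Hf Hs.
  by rewrite E inE.
have [u] := set0Pn _ NE; rewrite !inE => /andP [Hf Hs].
by rewrite (bigD1 u) //= Hf Hs mul0r.
Qed.

Lemma bw_sum1 : \sum_(A : {set U}) bern_weight p A = 1.
Proof.
have := bw_miss set0; rewrite cards0 expr0 => <-; apply: eq_bigr => A _.
by rewrite setI0 eqxx mulr1.
Qed.

Lemma avg_const k : \sum_(A : {set U}) bern_weight p A * k = k.
Proof. by rewrite -big_distrl /= bw_sum1 mul1r. Qed.

Lemma avg_le (f : {set U} -> R) c :
  (forall A, f A <= c) -> \sum_(A : {set U}) bern_weight p A * f A <= c.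
Proof.
move=> Hf; apply: (@le_trans _ _ (\sum_(A : {set U}) bern_weight p A * c)); last by rewrite avg_const.
apply: ler_sum => A _.
by apply: ler_wpM2l; [apply: bw_ge0|apply: Hf].
Qed.

End W.

Section Main.
Variable R : realFieldType.
Variables X Y Z : finType.
Variable T : {set X * Y * Z}.

Definition e1 (A : {set X}) : R := (A :&: piX T == set0)%:R.
Definition e2 (A : {set X}) (B : {set Y}) : R :=
  match [pick x in A :&: piX T] with
  | Some x => (B :&: sliceY T x == set0)%:R
  | None => 0 end.
Definition e3 (A : {set X}) (B : {set Y}) (C : {set Z}) : R :=
  match [pick x in A :&: piX T] with
  | Some x => match [pick y in B :&: sliceY T x] with
     | Some y => (C :&: sliceZ T (x, y) == set0)%:R
     | None => 0 end
  | None => 0 end.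

Lemma e1_ge0 A : 0 <= e1 A. Proof. by rewrite /e1 ler0n. Qed.
Lemma e2_ge0 A B : 0 <= e2 A B.
Proof. by rewrite /e2; case: pickP => [x _|_]; rewrite ?ler0n. Qed.
Lemma e3_ge0 A B C : 0 <= e3 A B C.
Proof. by rewrite /e3; case: pickP => [x _|_]; [case: pickP => [y _|_]|]; rewrite ?ler0n. Qed.

Lemma miss_le A B C :
  ((T :&: setX (setX A B) C == set0)%:R : R) <= e1 A + e2 A B + e3 A B C.
Proof.
have h1 := e1_ge0 A; have h2 := e2_ge0 A B; have h3 := e3_ge0 A B C.
case: eqP => [E|_]; last by rewrite /= !addr_ge0.
rewrite /= /e1 /e2 /e3 in h1 h2 h3 *.
case: pickP => [x Hx|Hn] in h2 h3 *; last first.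
  suff -> : A :&: piX T == set0 by move: h2 h3 => /=; lra.
  by apply/eqP/setP => x; rewrite Hn inE.
case: pickP => [y Hy|Hn] in h3 *; last first.
  suff -> : B :&: sliceY T x == set0 by move: h1 h3 => /=; lra.
  by apply/eqP/setP => y; rewrite Hn inE.
suff -> : C :&: sliceZ T (x, y) == set0 by move: h1 h2 => /=; lra.
apply/eqP/setP => z; rewrite !inE; apply/negP => /andP [Hz].
case/imsetP => t; rewrite inE => /andP [Ht /eqP Ht1] Ht2.
have : t \in T :&: setX (setX A B) C.
  move: Hx Hy; rewrite !inE => /andP [Hx _] /andP [Hy _].
  by rewrite Ht /= Ht1 /= Hx Hy -Ht2 Hz.
by rewrite E inE.
Qed.
End Main.
Arguments e1 {R X Y Z} T A.
Arguments e2 {R X Y Z} T A B.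
Arguments e3 {R X Y Z} T A B C.

Lemma tri (R : realFieldType) (X Y Z : finType) (a b c : R)
   (f : {set X} -> {set Y} -> {set Z} -> R) :
  \sum_(A : {set X}) \sum_(B : {set Y}) \sum_(C : {set Z})
    bern_weight a A * bern_weight b B * bern_weight c C * f A B C =
  \sum_(A : {set X}) bern_weight a A * (\sum_(B : {set Y}) bern_weight b B *
     (\sum_(C : {set Z}) bern_weight c C * f A B C)).
Proof.
apply: eq_bigr => A _; rewrite big_distrr; apply: eq_bigr => B _ /=.
rewrite !big_distrr; apply: eq_bigr => C _ /=; by rewrite !mulrA.
Qed.

Lemma pow_mono (R : realFieldType) (q : R) m n : 0 <= q <= 1 -> (m <= n)%N -> q ^+ n <= q ^+ m.
Proof. by case/andP => h0 h1 hmn; apply: ler_wiXn2l. Qed.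

Theorem lemma4p5 (R : realFieldType) (X Y Z : finType) (T : {set X * Y * Z})
    (alpha beta gamma : R)
    (ha0 : 0 <= alpha) (ha1 : alpha <= 1)
    (hb0 : 0 <= beta) (hb1 : beta <= 1)
    (hc0 : 0 <= gamma) (hc1 : gamma <= 1) :
  prob_miss T alpha beta gamma <=
    (1 - alpha) ^+ #|piX T| + (1 - beta) ^+ minY T + (1 - gamma) ^+ minZ T.
Proof.
have qa : 0 <= 1 - alpha <= 1 by apply/andP; split; lra.
have qb : 0 <= 1 - beta <= 1 by apply/andP; split; lra.
have qc : 0 <= 1 - gamma <= 1 by apply/andP; split; lra.
pose w3 (A : {set X}) (B : {set Y}) (C : {set Z}) := bern_weight alpha A * bern_weight beta B * bern_weight gamma C.
have step : prob_miss T alpha beta gamma <= (\sum_(A : {set X}) \sum_(B : {set Y}) \sum_(C : {set Z})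
    w3 A B C * (e1 T A + e2 T A B + e3 T A B C)).
  rewrite /prob_miss; apply: ler_sum => A _; apply: ler_sum => B _; apply: ler_sum => C _.
  apply: ler_wpM2l; last exact: miss_le.
  by rewrite /w3; apply: mulr_ge0; [apply: mulr_ge0|]; apply: bw_ge0.
apply: le_trans step _.
have -> : \sum_(A : {set X}) \sum_(B : {set Y}) \sum_(C : {set Z})
    w3 A B C * (e1 T A + e2 T A B + e3 T A B C) =
  \sum_(A : {set X}) \sum_(B : {set Y}) \sum_(C : {set Z}) w3 A B C * e1 T A +
  \sum_(A : {set X}) \sum_(B : {set Y}) \sum_(C : {set Z}) w3 A B C * e2 T A B +
  \sum_(A : {set X}) \sum_(B : {set Y}) \sum_(C : {set Z}) w3 A B C * e3 T A B C.
  rewrite -!big_split /=; apply: eq_bigr => A _; rewrite -!big_split /=.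
  apply: eq_bigr => B _; rewrite -!big_split /=; apply: eq_bigr => C _.
  by rewrite !mulrDr.
rewrite /w3 !tri.
apply: lerD; first apply: lerD.
- rewrite le_eqVlt; apply/orP; left; apply/eqP.
  rewrite -(@bw_miss _ _ alpha (piX T)); apply: eq_bigr => A _.
  by rewrite !avg_const.
- apply: avg_le => // A; under eq_bigr => B _ do rewrite avg_const.
  rewrite /e2; case: pickP => [x Hx|_]; last first.
    rewrite (eq_bigr (fun _ => 0)); last by move=> *; rewrite mulr0.
    by rewrite big1 // exprn_ge0 //; case/andP: qb.
  rewrite bw_miss //; apply: pow_mono => //; apply: bminn_le.
  by move: Hx; rewrite inE => /andP [].
- apply: avg_le => // A; apply: avg_le => // B.
  rewrite /e3; case: pickP => [x Hx|_]; last first.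
    rewrite (eq_bigr (fun _ => 0)); last by move=> *; rewrite mulr0.
    by rewrite big1 // exprn_ge0 //; case/andP: qc.
  case: pickP => [y Hy|_]; last first.
    rewrite (eq_bigr (fun _ => 0)); last by move=> *; rewrite mulr0.
    by rewrite big1 // exprn_ge0 //; case/andP: qc.
  rewrite bw_miss //; apply: pow_mono => //; apply: bminn_le.
  move: Hy; rewrite inE => /andP [_ /imsetP [t]]; rewrite inE => /andP [Ht /eqP Hx1] ->.
  apply/imsetP; exists t => //.
  by case: t Ht Hx1 => [[a b] c] /= _ ->.
Qed.
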